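(* Let $m\equiv4\pmod8$, let $\mathfrak v_m$ be the irreducible $C(m)$-module, and let $\mathfrak v_m^p=\mathfrak w_+^p\oplus\mathfrak w_-^p$ be the decomposition into eigenspaces of $K_m$ with eigenvalues $\pm1$. (1) If $\mathcal L_1\subset\mathfrak w_+^p$ is a $C^+(m)$-submodule and $\mathcal L_1^\perp$ is its orthogonal complement in $\mathfrak w_+^p$, then $\mathcal L=\mathcal L_1+J_m(\mathcal L_1^\perp)$ is a Lagrangian subspace of $\mathfrak v_m^p$. (2) Every Lagrangian subspace of $\mathfrak v_m^p$ is of this form.
   Context: $C(m)$ is the real Clifford algebra of $\mathbb R^m$ (relations $z^2=-\langle z,z\rangle1$), $C^+(m)$ its even subalgebra (generated by products of two elements of $\mathbb R^m$). Fix an orthonormal basis $z_1,\dots,z_m$ of $\mathbb R^m$, $J_i=J_{z_i}$, and $K_m=J_1\cdots J_m$ (symmetric with $K_m^2=1$ when $m\equiv0\pmod4$). $\mathfrak v_m^p$ is the direct sum of $p$ copies of the irreducible module, with an inner product making each $J_z$ skew-symmetric, and bracket $\mathfrak v\wedge\mathfrak v\to\mathbb R^m$ given by $\langle z,[u,v]\rangle=(J_zu,v)$. A Lagrangian subspace is $\mathcal L\subset\mathfrak v_m^p$ with $[\mathcal L,\mathcal L]=0$ and $\dim\mathcal L=\frac12\dim\mathfrak v_m^p$. *)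

(* Defs.v *)
(* Vectors of v = R^N are ROW vectors 'rV[R]_N; a linear map
   is a matrix A acting by v |-> v *m A; subspaces are row spaces (mxalgebra).
   The inner product is (u,v) = u *m v^T. Basis index of R^m runs over 1..m. *)
From HB Require Import structures.
From mathcomp Require Import all_boot all_order all_algebra.
From mathcomp Require Import reals.
Set Implicit Arguments.
Unset Strict Implicit.
Unset Printing Implicit Defensive.
Import Order.TTheory GRing.Theory Num.Theory.
Local Open Scope ring_scope.

Section Clifford.
Variables (R : realType) (N m : nat) (J : nat -> 'M[R]_N).

Definition clifford_module : Prop :=
  (forall i, (1 <= i <= m)%N -> (J i)^T = - J i) /\
  (forall i, (1 <= i <= m)%N -> J i *m J i = - 1%:M) /\
  (forall i j, (1 <= i <= m)%N -> (1 <= j <= m)%N -> i != j ->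
      J i *m J j = - (J j *m J i)).

Definition cl_invariant (S : 'M[R]_N) : Prop :=
  forall i, (1 <= i <= m)%N -> (S *m J i <= S)%MS.

Definition cl_irreducible (S : 'M[R]_N) : Prop :=
  (0 < \rank S)%N /\ cl_invariant S /\
  forall T : 'M[R]_N, (T <= S)%MS -> cl_invariant T ->
    \rank T = 0%N \/ (T == S)%MS.

Definition sum_of_p_irreducibles (p : nat) : Prop :=
  exists W : 'I_p -> 'M[R]_N,
    (forall k, cl_irreducible (W k)) /\
    (\sum_(k < p) W k == 1%:M)%MS /\
    (\sum_(k < p) \rank (W k) = N)%N.

Definition clplus_invariant (S : 'M[R]_N) : Prop :=
  forall i j, (1 <= i <= m)%N -> (1 <= j <= m)%N ->
    (S *m (J i *m J j) <= S)%MS.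

(* matrix of the operator K_m = J_1 J_2 ... J_m (acting on row vectors the
   matrix is J m *m ... *m J 1) *)
Definition Kmx : 'M[R]_N := foldr (fun i A => A *m J i) 1%:M (iota 1 m).

Definition Wplus : 'M[R]_N := kermx (Kmx - 1%:M).

Definition perp_in_Wplus (S : 'M[R]_N) : 'M[R]_N := (Wplus :&: kermx S^T)%MS.

(* isotropic: [L, L] = 0, where <z,[u,v]> = (J_z u, v) *)
Definition isotropic (L : 'M[R]_N) : Prop :=
  forall u v : 'rV[R]_N, (u <= L)%MS -> (v <= L)%MS ->
    forall i, (1 <= i <= m)%N -> u *m J i *m v^T = 0.

Definition lagrangian (L : 'M[R]_N) : Prop :=
  isotropic L /\ (\rank L * 2 = N)%N.

End Clifford.

(* Main.v *)
From HB Require Import structures.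
From mathcomp Require Import all_boot all_order all_algebra.
From mathcomp Require Import reals.
From mathcomp Require Import zify ring lra.
Require Import Defs.
Set Implicit Arguments.
Unset Strict Implicit.
Unset Printing Implicit Defensive.
Import Order.TTheory GRing.Theory Num.Theory.
Local Open Scope ring_scope.

Section LA.
Variables (R : realType) (N m : nat) (J : nat -> 'M[R]_N) (K : 'M[R]_N).
Local Notation inm i := (1 <= i <= m)%N.
Hypothesis Hm1 : (1 <= m)%N.
Hypothesis HJt : forall i, inm i -> (J i)^T = - J i.
Hypothesis HJJ : forall i, inm i -> J i *m J i = - 1%:M.
Hypothesis HJa : forall i j, inm i -> inm j -> i != j -> J i *m J j = - (J j *m J i).
Hypothesis HKt : K^T = K.
Hypothesis HKK : K *m K = 1%:M.
Hypothesis HKJ : forall i, inm i -> K *m J i = - (J i *m K).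

Local Notation A := (J m).
Local Notation W := (kermx (K - 1%:M)).
Local Notation Wm := (kermx (K + 1%:M)).

Lemma inmm : inm m. Proof. by rewrite Hm1 leqnn. Qed.

Lemma inW p (X : 'M[R]_(p, N)) : (X <= W)%MS = (X *m K == X).
Proof. by rewrite sub_kermx mulmxBr mulmx1 subr_eq0. Qed.

Lemma inWm p (X : 'M[R]_(p, N)) : (X <= Wm)%MS = (X *m K == - X).
Proof. by rewrite sub_kermx mulmxDr mulmx1 addr_eq0. Qed.

Lemma WJ p (X : 'M[R]_(p, N)) i : inm i -> (X <= W)%MS -> (X *m J i <= Wm)%MS.
Proof.
move=> hi; rewrite inW inWm => /eqP hX.
have e : J i *m K = - (K *m J i) by rewrite HKJ // opprK.
by rewrite -mulmxA e mulmxN mulmxA hX.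
Qed.

Lemma WmJ p (X : 'M[R]_(p, N)) i : inm i -> (X <= Wm)%MS -> (X *m J i <= W)%MS.
Proof.
move=> hi; rewrite inW inWm => /eqP hX.
have e : J i *m K = - (K *m J i) by rewrite HKJ // opprK.
by rewrite -mulmxA e mulmxN mulmxA hX mulNmx opprK.
Qed.

Lemma mx_negself p q (M : 'M[R]_(p, q)) : M = - M -> M = 0.
Proof.
move=> h; apply/matrixP => a b; have := congr1 (fun M : 'M[R]_(p, q) => M a b) h.
rewrite !mxE => e; lra.
Qed.

Lemma orthW p q (X : 'M[R]_(p, N)) (Y : 'M[R]_(q, N)) :
  (X <= W)%MS -> (Y <= Wm)%MS -> X *m Y^T = 0.
Proof.
rewrite inW inWm => /eqP hX /eqP hY; apply: mx_negself.
by rewrite -{1}hX -mulmxA -{1}HKt -trmx_mul hY linearN /= mulmxN.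
Qed.

Lemma orthW' p q (X : 'M[R]_(p, N)) (Y : 'M[R]_(q, N)) :
  (X <= W)%MS -> (Y <= Wm)%MS -> Y *m X^T = 0.
Proof.
move=> hX hY; apply: trmx_inj; by rewrite trmx_mul trmxK (orthW hX hY) linear0.
Qed.

Lemma WWm0 p (X : 'M[R]_(p, N)) : (X <= W)%MS -> (X <= Wm)%MS -> X = 0.
Proof.
rewrite inW inWm => /eqP h1 /eqP h2; apply: mx_negself; by rewrite -h2 h1.
Qed.

Lemma bil p q (S T : 'M[R]_N) (X : 'M[R]_(p, N)) (Y : 'M[R]_(q, N)) B :
  (X <= S)%MS -> (Y <= T)%MS -> S *m B *m T^T = 0 -> X *m B *m Y^T = 0.
Proof.
move=> /submxP [D ->] /submxP [E ->] h.
by rewrite trmx_mul -!mulmxA (mulmxA S) (mulmxA (S *m B)) h mul0mx mulmx0.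
Qed.

Lemma AA : A *m A = - 1%:M. Proof. exact: HJJ inmm. Qed.
Lemma Aunit : A \in unitmx.
Proof. have : A *m (- A) = 1%:M by rewrite mulmxN AA opprK. by case/mulmx1_unit. Qed.
Lemma rankMA p (X : 'M[R]_(p, N)) : \rank (X *m A) = \rank X.
Proof. by rewrite mxrankMfree // row_free_unit Aunit. Qed.

Lemma rankW : (\rank W * 2 = N)%N.
Proof.
have h1 : (\rank W <= \rank Wm)%N.
  by rewrite -(rankMA W); apply: mxrankS; apply: WJ (inmm) _.
have h2 : (\rank Wm <= \rank W)%N.
  by rewrite -(rankMA Wm); apply: mxrankS; apply: WmJ (inmm) _.
have hcap : \rank (W :&: Wm)%MS = 0%N.
  by rewrite (WWm0 (capmxSl _ _) (capmxSr _ _)) mxrank0.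
have hs := mxrank_sum_cap W Wm.
have hle := rank_leq_col (W + Wm)%MS.
have hKm : ((K - 1%:M) <= Wm)%MS.
  by rewrite sub_kermx mulmxDr mulmxBl HKK mulmx1 mul1mx addrA subrK subrr.
have hk1 := mxrank_ker (K - 1%:M). have hk2 := mxrank_ker (K + 1%:M).
have h3 := mxrankS hKm.
have hr1 := rank_leq_col (K - 1%:M). have hr2 := rank_leq_col (K + 1%:M).
lia.
Qed.

Lemma iso_mx (L : 'M[R]_N) : isotropic m J L ->
  forall i, inm i -> L *m J i *m L^T = 0.
Proof.
move=> hL i hi; apply/matrixP => r s.
have := hL (row r L) (row s L) (row_sub r L) (row_sub s L) i hi.
move=> /(congr1 (fun M : 'M[R]_1 => M 0 0)) /= => e.
have e0 : (0 : 'M[R]_1) 0 0 = 0 by rewrite mxE.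
rewrite e0 in e; rewrite [RHS]mxE -e.
rewrite !mxE; apply: eq_bigr => k _; rewrite !mxE; congr (_ * _).
by apply: eq_bigr => l _; rewrite !mxE.
Qed.

Lemma iso_rank (L : 'M[R]_N) : L *m A *m L^T = 0 -> (\rank L * 2 <= N)%N.
Proof.
move=> h; have : (L *m A <= kermx L^T)%MS by rewrite sub_kermx h.
move/mxrankS; rewrite rankMA mxrank_ker mxrank_tr => h2.
have := rank_leq_col L; lia.
Qed.

Definition clp (S : 'M[R]_N) := forall i j, inm i -> inm j -> (S *m (J i *m J j) <= S)%MS.

Section Part1.
Variable L1 : 'M[R]_N.
Hypothesis hL1W : (L1 <= W)%MS.
Hypothesis hc : clp L1.
Local Notation P := (W :&: kermx L1^T)%MS.

Lemma hPW : (P <= W)%MS. Proof. exact: capmxSl. Qed.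
Lemma hPk : P *m L1^T = 0. Proof. by apply/eqP; rewrite -sub_kermx capmxSr. Qed.

Lemma H0 p (X : 'M[R]_(p, N)) : (X <= L1)%MS -> X *m P^T = 0.
Proof.
move=> /submxP [D ->]; rewrite -mulmxA.
have -> : L1 *m P^T = 0 by apply: trmx_inj; rewrite trmx_mul trmxK hPk linear0.
by rewrite mulmx0.
Qed.

Lemma HH i : inm i -> L1 *m J i *m A *m P^T = 0.
Proof. move=> hi; apply: H0; rewrite -mulmxA; exact: hc hi inmm. Qed.

Lemma F1 i : inm i -> L1 *m J i *m L1^T = 0.
Proof. move=> hi; apply: orthW'; [exact: hL1W | exact: WJ]. Qed.

Lemma F2 i : inm i -> L1 *m J i *m (P *m A)^T = 0.
Proof.
move=> hi; rewrite trmx_mul HJt ?inmm // mulNmx mulmxN !mulmxA HH // oppr0.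
by apply/matrixP => a b; rewrite !mxE.
Qed.

Lemma F3 i : inm i -> P *m A *m J i *m L1^T = 0.
Proof.
move=> hi.
have e : P *m A *m J i *m L1^T = (L1 *m J i *m A *m P^T)^T.
  by rewrite !trmx_mul trmxK (HJt hi) (HJt inmm) !mulNmx !mulmxN opprK !mulmxA.
by rewrite e HH // linear0.
Qed.

Lemma F4 i : inm i -> P *m A *m J i *m (P *m A)^T = 0.
Proof.
move=> hi; rewrite trmx_mul (HJt inmm) mulNmx mulmxN mulmxA.
rewrite (orthW' hPW) ?oppr0 //.
apply: WJ inmm _; apply: WmJ hi _; apply: WJ inmm _; exact: hPW.
Qed.

Lemma part1_iso : isotropic m J (L1 + P *m A)%MS.
Proof.
move=> u v /sub_addsmxP [[a1 a2] ->] /sub_addsmxP [[b1 b2] ->] i hi /=.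
have s1 := submxMl a1 L1; have s2 := submxMl a2 (P *m A).
have t1 := submxMl b1 L1; have t2 := submxMl b2 (P *m A).
rewrite raddfD /= !mulmxDl !mulmxDr.
rewrite (bil s1 t1 (F1 hi)) (bil s1 t2 (F2 hi)) (bil s2 t1 (F3 hi)) (bil s2 t2 (F4 hi)).
by rewrite !addr0.
Qed.

Lemma part1_rank : (\rank (L1 + P *m A)%MS * 2 = N)%N.
Proof.
have hle := iso_rank (iso_mx part1_iso inmm).
have hcap : \rank (L1 :&: P *m A)%MS = 0%N.
  rewrite (WWm0 (submx_trans (capmxSl _ _) hL1W)) ?mxrank0 //.
  apply: submx_trans (capmxSr _ _) _; apply: WJ inmm _; exact: hPW.
have hs := mxrank_sum_cap L1 (P *m A).
rewrite rankMA in hs.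
have hs2 := mxrank_sum_cap W (kermx L1^T).
rewrite (mxrank_ker L1^T) mxrank_tr in hs2.
have := rank_leq_col (W + kermx L1^T)%MS.
have := rank_leq_col L1.
have := rankW.
lia.
Qed.

End Part1.
Definition Qf a n := foldr (fun i B => B *m J i) 1%:M (iota a n).

Hypothesis HKS : forall S, clp S -> (S *m K <= S)%MS.

Lemma part2 (L : 'M[R]_N) : lagrangian m J L ->
  exists L1 : 'M[R]_N,
    [/\ (L1 <= W)%MS, clp L1 & (L == L1 + (W :&: kermx L1^T)%MS *m A)%MS].
Proof.
case=> hiso hr.
have hLJ i (hi : inm i) : (L *m J i <= kermx L^T)%MS by rewrite sub_kermx iso_mx.
have hrk : \rank (kermx L^T) = \rank L by rewrite mxrank_ker mxrank_tr; lia.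
have hLA : (kermx L^T <= L *m A)%MS.
  have /andP[] : (L *m A == kermx L^T)%MS.
    by rewrite -(mxrank_leqif_eq (hLJ m inmm)).2 rankMA hrk.
  by [].
have hneg (X : 'M[R]_N) : (X <= kermx L^T)%MS -> (X *m A <= L)%MS.
  move=> hX; have := submxMr A (submx_trans hX hLA).
  rewrite -mulmxA AA mulmxN mulmx1; move/submx_trans; apply.
  by rewrite eqmx_opp.
have hJA i (hi : inm i) : (L *m J i *m A <= L)%MS by apply: hneg; apply: hLJ.
have hclp : clp L.
  move=> i j hi hj; change (L *m (J i *m J j) <= L)%MS.
  case: (eqVneq j m) => [->|hjm]; first by rewrite mulmxA hJA.
  have e : J i *m J j = J i *m A *m (J j *m A).
    have e2 : A *m J j = - (J j *m A) by apply: HJa; rewrite ?inmm // eq_sym.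
    by rewrite !mulmxA -(mulmxA (J i) A) e2 mulmxN mulNmx -!mulmxA AA !mulmxN mulmx1 opprK.
  change (L *m (J i *m J j) <= L)%MS; rewrite e !mulmxA.
  rewrite -(mulmxA _ (J j) A).
  apply: submx_trans (submxMr (J j *m A) (hJA i hi)) _.
  rewrite mulmxA; exact: hJA.
have hK := HKS hclp.
set L1 := (L :&: W)%MS.
have hclp1 : clp L1.
  move=> i j hi hj; rewrite sub_capmx; apply/andP; split.
    exact: submx_trans (submxMr _ (capmxSl _ _)) (hclp i j hi hj).
  rewrite mulmxA; apply: WmJ hj _; apply: WJ hi _; exact: capmxSr.
exists L1; split => //; first exact: capmxSr.
set P := (W :&: kermx L1^T)%MS.
pose Lp := 2^-1 *: (L + L *m K); pose Lm := 2^-1 *: (L - L *m K).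
have eL : L = Lp + Lm.
  apply/matrixP => a b; rewrite /Lp /Lm !mxE.
  set s := (\sum_j _); rewrite -mulrDr.
  have -> : L a b + s + (L a b - s) = L a b * 2 by ring.
  by rewrite mulrCA mulVf ?mulr1 // pnatr_eq0.
have hLp1 : (Lp <= L1)%MS.
  rewrite sub_capmx; apply/andP; split.
    by apply: scalemx_sub; apply: addmx_sub.
  rewrite inW -scalemxAl mulmxDl -mulmxA HKK mulmx1 addrC //.
have hLm : (Lm <= Wm)%MS.
  rewrite inWm -scalemxAl mulmxBl -mulmxA HKK mulmx1 -scalerN opprB //.
have hPL : (P *m A <= L)%MS.
  apply: hneg; rewrite sub_kermx; apply/eqP.
  rewrite eL raddfD /= mulmxDr (orthW (capmxSl _ _) hLm) addr0.
  apply: trmx_inj; rewrite trmx_mul trmxK (H0 hLp1) linear0 //.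
have hsub : (L1 + P *m A <= L)%MS by rewrite addsmx_sub capmxSl hPL.
have hrk2 := part1_rank (capmxSr L W) hclp1.
have h := (mxrank_leqif_eq hsub).2.
have hre : \rank (L1 + P *m A)%MS = \rank L by move: hrk2 hr; rewrite -/P -/L1; lia.
rewrite hre eqxx in h.
apply/andP; split; last exact: hsub.
by move/esym/andP: h => [].
Qed.

End LA.

Section CL.
Variables (R : realType) (N m : nat) (J : nat -> 'M[R]_N).
Local Notation inm i := (1 <= i <= m)%N.
Hypothesis HJt : forall i, inm i -> (J i)^T = - J i.
Hypothesis HJJ : forall i, inm i -> J i *m J i = - 1%:M.
Hypothesis HJa : forall i j, inm i -> inm j -> i != j -> J i *m J j = - (J j *m J i).
Local Notation Q := (Qf J).
Local Notation clp := (clp m J).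

Lemma QS a n : Q a n.+1 = Q a.+1 n *m J a. Proof. by []. Qed.

Lemma Qcomm n a i : (1 <= a)%N -> (a + n <= m.+1)%N -> inm i ->
  Q a n *m J i = (-1) ^+ (n + (a <= i < a + n)%N) *: (J i *m Q a n).
Proof.
elim: n a i => [|n IH] a i ha hb hi.
  have -> : (a <= i < a + 0)%N = false by apply/negP => /andP [] ; lia.
  by rewrite /Qf /= mul1mx mulmx1 scale1r.
rewrite QS.
have ia : inm a by lia.
case: (eqVneq i a) => [->|hia].
  rewrite {1}(IH a.+1 a) //; try lia.
  have -> : (a.+1 <= a < a.+1 + n)%N = false by apply/negP => /andP [] ; lia.
  have -> : (a <= a < a + n.+1)%N = true by apply/andP; split; lia.
  by rewrite -scalemxAl -!mulmxA addn0 addn1 !exprS !mulN1r opprK.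
rewrite -mulmxA HJa //; last by rewrite eq_sym.
rewrite mulmxN (mulmxA (Q a.+1 n)) (IH a.+1 i) //; try lia.
have -> : (a <= i < a + n.+1)%N = (a.+1 <= i < a.+1 + n)%N.
  by apply/idP/idP => /andP [h1 h2]; apply/andP; split; lia.
rewrite -scalemxAl addSn exprS mulN1r scaleNr -!mulmxA.
by [].
Qed.

Lemma QtQ n a : (1 <= a)%N -> (a + n <= m.+1)%N -> (Q a n)^T *m Q a n = 1%:M.
Proof.
elim: n a => [|n IH] a ha hb.
  by rewrite /Qf /= trmx1 mul1mx.
have ia : inm a by lia.
rewrite QS trmx_mul -mulmxA (mulmxA _ (Q a.+1 n)) IH; try lia.
by rewrite mul1mx HJt // mulNmx HJJ // opprK.
Qed.

Fixpoint sg (n : nat) : R := if n is n'.+1 then - ((-1) ^+ n' * sg n') else 1.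

Lemma sg4 k : sg (k * 4) = 1.
Proof.
elim: k => [|k IH] //.
have -> : (k.+1 * 4 = (k * 4).+4)%N by lia.
rewrite /= -/(sg (k * 4)) IH !exprS.
set x := (-1) ^+ (k * 4).
have hx : x * x = 1 by rewrite /x -exprMn mulrNN mulr1 expr1n.
have -> : - ((-1 * (-1 * (-1 * x))) * - ((-1 * (-1 * x)) * - ((-1 * x) * - (x * 1))))
   = (x * x) * (x * x) by ring.
by rewrite hx mulr1.
Qed.

Lemma QQ n a : (1 <= a)%N -> (a + n <= m.+1)%N -> Q a n *m Q a n = sg n *: 1%:M.
Proof.
elim: n a => [|n IH] a ha hb.
  by rewrite /Qf /= mul1mx scale1r.
have ia : inm a by lia.
have hb' : (a.+1 + n <= m.+1)%N by lia.
have hc := @Qcomm n a.+1 a (ltn0Sn _) hb' ia.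
have ef : (a.+1 <= a < a.+1 + n)%N = false by apply/negP => /andP [] ; lia.
rewrite ef in hc.
have hc' : J a *m Q a.+1 n = (-1) ^+ n *: (Q a.+1 n *m J a).
  rewrite hc.
  by rewrite scalerA addn0 -exprMn mulrNN mulr1 expr1n scale1r.
rewrite QS -mulmxA (mulmxA (J a)) hc' -scalemxAl -scalemxAr !mulmxA.
rewrite -(mulmxA (Q a.+1 n *m Q a.+1 n)) HJJ // (IH a.+1) //; try lia.
by rewrite mulmxN mulmx1 scalerN scalerA -scaleNr.
Qed.

Lemma clp_Q (S : 'M[R]_N) : clp S -> forall k a, (1 <= a)%N -> (a + k.*2 <= m.+1)%N ->
  (S *m Q a k.*2 <= S)%MS.
Proof.
move=> hS; elim=> [|k IH] a ha hb.
  by rewrite /Qf /= mulmx1 submx_refl.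
change (S *m (Q a.+2 k.*2 *m J a.+1 *m J a) <= S)%MS.
rewrite !mulmxA -(mulmxA _ (J a.+1) (J a)).
apply: submx_trans (submxMr _ (IH a.+2 _ _)) _; try lia.
apply: hS; lia.
Qed.
End CL.


Theorem lemma5p17 (R : realType) (m p N : nat) (J : nat -> 'M[R]_N) :
  (m %% 8 = 4)%N ->
  clifford_module m J ->
  sum_of_p_irreducibles m J p ->
  (forall L1 : 'M[R]_N,
     (L1 <= Wplus m J)%MS -> clplus_invariant m J L1 ->
     lagrangian m J (L1 + perp_in_Wplus m J L1 *m J m)%MS) /\
  (forall L : 'M[R]_N, lagrangian m J L ->
     exists L1 : 'M[R]_N,
       [/\ (L1 <= Wplus m J)%MS, clplus_invariant m J L1 &
           (L == L1 + perp_in_Wplus m J L1 *m J m)%MS]).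
Proof.
move=> hm8 [HJt [HJJ HJa]] _.
have hm1 : (1 <= m)%N by lia.
have hm4 : m = (((m %/ 8) * 2 + 1) * 4)%N by lia.
have hmodd : odd m = false by rewrite hm4 oddM andbF.
have eK : Kmx m J = Qf J 1 m by [].
have HKJ : forall i, (1 <= i <= m)%N -> Kmx m J *m J i = - (J i *m Kmx m J).
  move=> i hi; have hb : (1 + m <= m.+1)%N by lia.
  rewrite eK (Qcomm HJa (leqnn 1) hb hi).
  have -> : (1 <= i < 1 + m)%N = true by apply/andP; split; lia.
  by rewrite -signr_odd oddD hmodd /= expr1 scaleN1r.
have HKK : Kmx m J *m Kmx m J = 1%:M.
  have hb : (1 + m <= m.+1)%N by lia.
  rewrite eK (QQ HJJ HJa (leqnn 1) hb).
  by rewrite {1}hm4 sg4 scale1r.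
have HKtK : (Kmx m J)^T *m Kmx m J = 1%:M.
  have hb : (1 + m <= m.+1)%N by lia.
  by rewrite eK (QtQ HJt HJJ (leqnn 1) hb).
have HKt : (Kmx m J)^T = Kmx m J.
  by rewrite -[LHS]mulmx1 -HKK mulmxA HKtK mul1mx.
have e2 : (m./2).*2 = m by have := odd_double_half m; rewrite hmodd add0n.
have HKS : forall S, clp m J S -> (S *m Kmx m J <= S)%MS.
  move=> S hS; have h := @clp_Q _ _ _ _ S hS (m./2) 1 (leqnn 1).
  rewrite e2 in h; apply: h; lia.
split.
  move=> L1 hW hc; split.
    exact: (part1_iso hm1 HJt HKt HKJ hW hc).
  exact: (part1_rank hm1 HJt HJJ HKt HKK HKJ hW hc).
move=> L hL; exact: (part2 hm1 HJt HJJ HJa HKt HKK HKJ HKS hL).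
Qed.
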